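(* Let $\mathcal{X}=[0,1]$, $0<\gamma<\tfrac12$, $L>0$, and let $d$ be an integer with $1\le d\le\left|\mathsf{C}\!\left([0,1],|\cdot|,\sqrt{32/\pi}\cdot\frac{\gamma}{L}\right)\right|$. There exists a class $\mathcal{F}\subseteq[-1,1]^{[0,1]}$ of $L$-Lipschitz functions (w.r.t. $|\cdot|$) with $\mathsf{vc}(\mathcal{F})=d$ such that for any (possibly randomized) online learner there exists a sequence $(x_1,y_1),\dots,(x_T,y_T)\in[0,1]\times\{-1,+1\}$ with $$\sum_{t=1}^T\mathbb{E}\,\mathbb{1}[\hat y_t\neq y_t]-\mathsf{OPT}^{\gamma}_{\mathrm{margin}}\ge\Omega\!\left(\sqrt{T\cdot\mathsf{vc}(\mathcal{F})\ln\!\left(\frac{\left|\mathsf{C}\!\left([0,1],|\cdot|,\sqrt{32/\pi}\cdot\frac{\gamma}{L}\right)\right|}{\mathsf{vc}(\mathcal{F})}\right)}\right),$$ where $\mathsf{OPT}^{\gamma}_{\mathrm{margin}}=\min_{f\in\mathcal{F}}\sum_{t=1}^T\mathbb{1}[y_tf(x_t)\le\gamma]$.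
   Context: Online binary classification: on rounds $t=1,\dots,T$ the adversary reveals $x_t$, the learner outputs $\hat y_t\in\{-1,+1\}$, then $y_t$ is revealed; the expectation is over the learner's randomness. $\mathsf{vc}(\mathcal{F})$ is the pseudo-dimension of $\mathcal{F}$. $|\mathsf{C}([0,1],|\cdot|,r)|$ is the minimal number of points of $[0,1]$ such that every point of $[0,1]$ is within distance $r$ of one of them. $\Omega(\cdot)$ hides a positive absolute constant. *)

(* Defs.v *)
From Stdlib Require Import Reals Lra List ClassicalEpsilon.
Open Scope R_scope.

(* least natural number satisfying P (arbitrary if none exists) *)
Definition nat_min (P : nat -> Prop) : nat :=
  epsilon (inhabits 0%nat) (fun n => P n /\ forall m, P m -> (n <= m)%nat).

Definition in01 (x : R) : Prop := 0 <= x <= 1.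

Definition covering_number01 (r : R) : nat :=
  nat_min (fun n => exists S : list R, length S = n /\
     (forall s, In s S -> in01 s) /\
     (forall x, in01 x -> exists s, In s S /\ Rabs (x - s) <= r)).

Definition pshatters (F : (R -> R) -> Prop) (n : nat) : Prop :=
  exists (xs rs : nat -> R),
    (forall i, (i < n)%nat -> in01 (xs i)) /\
    forall b : nat -> bool, exists f, F f /\
      forall i, (i < n)%nat -> (rs i <= f (xs i) <-> b i = true).

Definition pdim_eq (F : (R -> R) -> Prop) (d : nat) : Prop :=
  pshatters F d /\ forall n, pshatters F n -> (n <= d)%nat.

Fixpoint sumR (n : nat) (g : nat -> R) : R :=
  match n with O => 0 | S k => sumR k g + g k end.

Definition lab (y : bool) : R := if y then 1 else -1.

(* A (possibly randomized) online learner: given the history of labelled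
   examples and the current instance, the probability that it predicts +1.
   For a fixed sequence this captures every randomized learner. *)
Definition learner := list (R * bool) -> R -> R.

Definition valid_learner (A : learner) : Prop :=
  forall h x, 0 <= A h x <= 1.

Definition history (xs : nat -> R) (ys : nat -> bool) (t : nat) : list (R * bool) :=
  map (fun s => (xs s, ys s)) (seq 0 t).

Definition exp_mistake (A : learner) (xs : nat -> R) (ys : nat -> bool) (t : nat) : R :=
  let p := A (history xs ys t) (xs t) in
  if ys t then 1 - p else p.

Definition expected_mistakes (A : learner) (xs : nat -> R) (ys : nat -> bool) (T : nat) : R :=
  sumR T (exp_mistake A xs ys).

Definition margin_loss (gamma : R) (f : R -> R) (xs : nat -> R) (ys : nat -> bool) (T : nat) : nat :=
  length (filter (fun t => if Rle_dec (lab (ys t) * f (xs t)) gamma then true else false)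
                 (seq 0 T)).

Definition OPT_margin (F : (R -> R) -> Prop) (gamma : R) (xs : nat -> R) (ys : nat -> bool) (T : nat) : nat :=
  nat_min (fun k => exists f, F f /\ margin_loss gamma f xs ys T = k).

(* Main.v *)
Require Import Defs.
From Stdlib Require Import Reals Lra Lia List ZArith ClassicalEpsilon Classical.
Open Scope R_scope.


Lemma wf_min (P : nat -> Prop) : forall n, P n -> exists n0, P n0 /\ forall m, P m -> (n0 <= m)%nat.
Proof.
  intro n. induction n as [n IH] using (well_founded_induction Wf_nat.lt_wf). intros Pn.
  destruct (classic (exists m, (m < n)%nat /\ P m)) as [[m [Hm Pm]]|H].
  - exact (IH m Hm Pm).
  - exists n. split; auto. intros m Pm. destruct (Compare_dec.le_lt_dec n m); auto.
    exfalso. apply H. eauto.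
Qed.

Lemma nat_min_le (P : nat -> Prop) n : P n -> (nat_min P <= n)%nat.
Proof.
  intros Pn. unfold nat_min.
  destruct (epsilon_spec (inhabits 0%nat) (fun n => P n /\ forall m, P m -> (n <= m)%nat)) as [_ H].
  - apply (wf_min P n Pn).
  - apply H; auto.
Qed.

Lemma sumR_ext n f g : (forall k, (k < n)%nat -> f k = g k) -> sumR n f = sumR n g.
Proof. induction n; simpl; intros H; auto. rewrite IHn by (intros; apply H; lia). rewrite H by lia. auto. Qed.

Lemma sumR_plus n f g : sumR n (fun k => f k + g k) = sumR n f + sumR n g.
Proof. induction n; simpl; [lra|]. rewrite IHn; lra. Qed.

Lemma sumR_scal n a f : sumR n (fun k => a * f k) = a * sumR n f.
Proof. induction n; simpl; [lra|]. rewrite IHn; lra. Qed.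

Lemma sumR_const n a : sumR n (fun _ => a) = INR n * a.
Proof. induction n; simpl sumR; [simpl; lra|]. rewrite IHn, S_INR; lra. Qed.

Lemma sumR_le n f g : (forall k, (k < n)%nat -> f k <= g k) -> sumR n f <= sumR n g.
Proof. induction n; simpl; intros H; [lra|]. pose proof (H n ltac:(lia)). pose proof (IHn ltac:(intros; apply H; lia)). lra. Qed.

Lemma sumR_nonneg n f : (forall k, (k < n)%nat -> 0 <= f k) -> 0 <= sumR n f.
Proof. intros H. replace 0 with (sumR n (fun _ => 0)). apply sumR_le; auto. rewrite sumR_const; lra. Qed.

Lemma sumR_app a b g : sumR (a + b) g = sumR a g + sumR b (fun j => g (a + j)%nat).
Proof. induction b; simpl. rewrite Nat.add_0_r; lra. rewrite Nat.add_succ_r; simpl. rewrite IHb; lra. Qed.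

Lemma sumR_mul n m g : sumR (n * m) g = sumR n (fun p => sumR m (fun j => g (p * m + j)%nat)).
Proof. induction n; simpl; auto. rewrite Nat.add_comm, sumR_app, IHn. auto. Qed.

Lemma sumR_single n g k : (k < n)%nat -> (forall j, (j < n)%nat -> j <> k -> g j = 0) -> sumR n g = g k.
Proof.
  induction n; intros Hk H; [lia|]. simpl.
  destruct (Nat.eq_dec k n) as [->|Hne].
  - rewrite (sumR_ext n g (fun _ => 0)). rewrite sumR_const; lra. intros j Hj; apply H; lia.
  - rewrite IHn by (try lia; intros; apply H; lia). rewrite (H n) by lia. lra.
Qed.

Lemma margin_loss_sum gamma f xs ys T :
  INR (margin_loss gamma f xs ys T) =
  sumR T (fun t => if Rle_dec (lab (ys t) * f (xs t)) gamma then 1 else 0).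
Proof.
  unfold margin_loss. induction T; simpl sumR; auto.
  rewrite seq_S, filter_app, length_app, plus_INR, IHT. simpl.
  destruct (Rle_dec _ _); simpl; lra.
Qed.


Lemma Rabs_le_inv x b : Rabs x <= b -> - b <= x <= b.
Proof. unfold Rabs; destruct Rcase_abs; lra. Qed.

Lemma Rmax_lip u v u' v' K : Rabs (u - u') <= K -> Rabs (v - v') <= K -> Rabs (Rmax u v - Rmax u' v') <= K.
Proof. unfold Rmax; intros H1 H2; apply Rabs_le; apply Rabs_le_inv in H1; apply Rabs_le_inv in H2;
  repeat destruct Rle_dec; lra. Qed.
Lemma Rmin_lip u v u' v' K : Rabs (u - u') <= K -> Rabs (v - v') <= K -> Rabs (Rmin u v - Rmin u' v') <= K.
Proof. unfold Rmin; intros H1 H2; apply Rabs_le; apply Rabs_le_inv in H1; apply Rabs_le_inv in H2;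
  repeat destruct Rle_dec; lra. Qed.

Definition Eb (L beta a W x : R) := Rmax 0 (Rmin beta (Rmin (L*(x-a)) (L*(a+W-x)))).
Definition hb (L beta a W c x : R) := Rmax (- Eb L beta a W x) (Rmin (Eb L beta a W x) (L*(x - c))).
Definition ak (d k : nat) := INR k / INR d.
Definition fv (o L beta : R) (d : nat) (c : nat -> R) (x : R) :=
  o + sumR d (fun k => hb L beta (ak d k) (/ INR d) (c k) x).
Definition Fcls o L beta d (f : R -> R) := exists c, f = fv o L beta d c.

Lemma Eb_bounds L beta a W x : 0 <= beta -> 0 <= Eb L beta a W x <= beta.
Proof. unfold Eb, Rmax, Rmin; intros; repeat destruct Rle_dec; lra. Qed.

Lemma Eb_nonneg L beta a W x : 0 <= Eb L beta a W x.
Proof. unfold Eb; apply Rmax_l. Qed.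

Lemma hb_bounds L beta a W c x : Rabs (hb L beta a W c x) <= Eb L beta a W x.
Proof. pose proof (Eb_nonneg L beta a W x). unfold hb. set (e := Eb L beta a W x) in *.
  apply Rabs_le. unfold Rmax, Rmin. repeat destruct Rle_dec; lra. Qed.

Lemma Eb_lip L beta a W x y : 0 < L -> 0 <= beta ->
  Rabs (Eb L beta a W x - Eb L beta a W y) <= L * Rabs (x - y).
Proof.
  intros HL Hb. unfold Eb. assert (0 <= L * Rabs (x - y)) by (pose proof (Rabs_pos (x-y)); nra).
  apply Rmax_lip. rewrite Rminus_diag, Rabs_R0; auto.
  apply Rmin_lip. rewrite Rminus_diag, Rabs_R0; auto.
  apply Rmin_lip.
  - replace (L*(x-a) - L*(y-a)) with (L*(x-y)) by ring. rewrite Rabs_mult, (Rabs_right L); lra.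
  - replace (L*(a+W-x) - L*(a+W-y)) with (L*(-(x-y))) by ring. rewrite Rabs_mult, Rabs_Ropp, (Rabs_right L); lra.
Qed.

Lemma hb_lip L beta a W c x y : 0 < L -> 0 <= beta ->
  Rabs (hb L beta a W c x - hb L beta a W c y) <= L * Rabs (x - y).
Proof.
  intros HL Hb. unfold hb. pose proof (Eb_lip L beta a W x y HL Hb).
  apply Rmax_lip. replace (- Eb L beta a W x - - Eb L beta a W y) with (-(Eb L beta a W x - Eb L beta a W y)) by ring.
  rewrite Rabs_Ropp; auto.
  apply Rmin_lip; auto.
  replace (L*(x-c) - L*(y-c)) with (L*(x-y)) by ring. rewrite Rabs_mult, (Rabs_right L); lra.
Qed.

Lemma Eb_out L beta a W x : 0 < L -> (x <= a \/ a + W <= x) -> Eb L beta a W x = 0.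
Proof. intros HL H. unfold Eb. assert (L*(x-a) <= 0 \/ L*(a+W-x) <= 0) by (destruct H; [left|right]; nra).
  unfold Rmax, Rmin; repeat destruct Rle_dec; lra. Qed.

Lemma hb_E0 L beta a W c x : Eb L beta a W x = 0 -> hb L beta a W c x = 0.
Proof. unfold hb; intros ->. unfold Rmax, Rmin; repeat destruct Rle_dec; lra. Qed.

Lemma hb_mono L beta a W c c' x : 0 < L -> 0 <= beta -> c <= c' -> hb L beta a W c' x <= hb L beta a W c x.
Proof. intros HL Hb Hc. unfold hb. assert (L*(x-c') <= L*(x-c)) by nra.
  unfold Rmax, Rmin; repeat destruct Rle_dec; lra. Qed.

Lemma INR_pos_d d : (1 <= d)%nat -> 0 < INR d.
Proof. intros; apply lt_0_INR; lia. Qed.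

Lemma ak_W d k : (1 <= d)%nat -> ak d k + / INR d = ak d (S k).
Proof. intros Hd. unfold ak. rewrite S_INR. pose proof (INR_pos_d d Hd). field. lra. Qed.

Lemma ak_le d j k : (1 <= d)%nat -> (j <= k)%nat -> ak d j <= ak d k.
Proof. intros Hd H. unfold ak. pose proof (INR_pos_d d Hd). apply le_INR in H.
  unfold Rdiv; apply Rmult_le_compat_r; auto. left; apply Rinv_0_lt_compat; auto. Qed.

Lemma block_exists d x : (1 <= d)%nat -> in01 x -> exists k, (k < d)%nat /\ ak d k <= x <= ak d k + / INR d.
Proof.
  intros Hd [H0 H1].
  assert (forall n, (1 <= n)%nat -> x <= ak d n -> exists k, (k < n)%nat /\ ak d k <= x <= ak d k + / INR d).
  { induction n as [|n IH]; intros Hn Hx; [lia|].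
    destruct (Nat.eq_dec n 0) as [->|Hn0].
    - exists 0%nat. split; [lia|]. rewrite ak_W by auto. unfold ak at 1. simpl. split; [unfold Rdiv; lra|auto].
    - destruct (Rle_dec x (ak d n)) as [Hle|Hlt].
      + destruct (IH ltac:(lia) Hle) as [k [Hk1 Hk2]]. exists k; split; [lia|auto].
      + exists n. split; [lia|]. rewrite ak_W by auto. lra. }
  apply (H d Hd). unfold ak. pose proof (INR_pos_d d Hd). replace (INR d / INR d) with 1 by (field; lra). auto.
Qed.

Lemma others_zero L beta d k j x : 0 < L -> (1 <= d)%nat -> ak d k <= x <= ak d k + / INR d -> j <> k ->
  Eb L beta (ak d j) (/ INR d) x = 0.
Proof.
  intros HL Hd Hx Hjk. apply Eb_out; auto.
  destruct (Compare_dec.lt_dec j k).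
  - right. rewrite ak_W by auto. pose proof (ak_le d (S j) k Hd ltac:(lia)). lra.
  - left. pose proof (ak_le d (S k) j Hd ltac:(lia)). rewrite <- ak_W in H by auto. lra.
Qed.

Lemma fv_block o L beta d c k x : 0 < L -> (1 <= d)%nat -> (k < d)%nat -> ak d k <= x <= ak d k + / INR d ->
  fv o L beta d c x = o + hb L beta (ak d k) (/ INR d) (c k) x.
Proof.
  intros HL Hd Hk Hx. unfold fv. f_equal. apply (sumR_single d (fun k => hb L beta (ak d k) (/ INR d) (c k) x) k); auto.
  intros j Hj Hjk. apply hb_E0. eapply others_zero; eauto.
Qed.

Lemma fv_bounds o L beta d c x : 0 < L -> 0 <= beta -> (1 <= d)%nat -> in01 x ->
  o - beta <= fv o L beta d c x <= o + beta.
Proof.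
  intros HL Hb Hd Hx. destruct (block_exists d x Hd Hx) as [k [Hk Hkx]].
  rewrite (fv_block o L beta d c k x) by auto.
  pose proof (hb_bounds L beta (ak d k) (/ INR d) (c k) x). pose proof (Eb_bounds L beta (ak d k) (/ INR d) x Hb).
  apply Rabs_le_inv in H. lra.
Qed.

Lemma fv_edge_lip L beta a W c x : 0 < L -> 0 <= beta -> 0 <= W -> a <= x <= a + W ->
  Rabs (hb L beta a W c x) <= L * (a + W - x) /\ Rabs (hb L beta a W c x) <= L * (x - a).
Proof.
  intros HL Hb HW Hx.
  assert (E1 : hb L beta a W c (a+W) = 0) by (apply hb_E0, Eb_out; auto; right; lra).
  assert (E2 : hb L beta a W c a = 0) by (apply hb_E0, Eb_out; auto; left; lra).
  pose proof (hb_lip L beta a W c x (a+W) HL Hb) as H1.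
  pose proof (hb_lip L beta a W c x a HL Hb) as H2.
  rewrite E1, Rminus_0_r in H1. rewrite E2, Rminus_0_r in H2.
  rewrite (Rabs_left1 (x - (a+W))) in H1 by lra. rewrite (Rabs_right (x - a)) in H2 by lra. split; nra.
Qed.

Lemma fv_lip o L beta d c x y : 0 < L -> 0 <= beta -> (1 <= d)%nat -> in01 x -> in01 y ->
  Rabs (fv o L beta d c x - fv o L beta d c y) <= L * Rabs (x - y).
Proof.
  intros HL Hb Hd Hx Hy.
  destruct (block_exists d x Hd Hx) as [i [Hi Hix]].
  destruct (block_exists d y Hd Hy) as [j [Hj Hjy]].
  rewrite (fv_block o L beta d c i x), (fv_block o L beta d c j y) by auto.
  pose proof (INR_pos_d d Hd). assert (0 <= / INR d) by (left; apply Rinv_0_lt_compat; auto).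
  destruct (Nat.lt_total i j) as [Hlt|[->|Hgt]].
  - pose proof (ak_le d (S i) j Hd Hlt). rewrite <- ak_W in H1 by auto.
    destruct (fv_edge_lip L beta (ak d i) (/ INR d) (c i) x HL Hb H0 Hix) as [A1 _].
    destruct (fv_edge_lip L beta (ak d j) (/ INR d) (c j) y HL Hb H0 Hjy) as [_ A2].
    rewrite (Rabs_left1 (x - y)) by lra.
    replace (o + hb L beta (ak d i) (/ INR d) (c i) x - (o + hb L beta (ak d j) (/ INR d) (c j) y))
      with (hb L beta (ak d i) (/ INR d) (c i) x + - hb L beta (ak d j) (/ INR d) (c j) y) by ring.
    eapply Rle_trans. apply Rabs_triang. rewrite Rabs_Ropp. nra.
  - replace (o + hb L beta (ak d j) (/ INR d) (c j) x - (o + hb L beta (ak d j) (/ INR d) (c j) y))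
      with (hb L beta (ak d j) (/ INR d) (c j) x - hb L beta (ak d j) (/ INR d) (c j) y) by ring.
    apply hb_lip; auto.
  - pose proof (ak_le d (S j) i Hd Hgt). rewrite <- ak_W in H1 by auto.
    destruct (fv_edge_lip L beta (ak d j) (/ INR d) (c j) y HL Hb H0 Hjy) as [A1 _].
    destruct (fv_edge_lip L beta (ak d i) (/ INR d) (c i) x HL Hb H0 Hix) as [_ A2].
    rewrite (Rabs_right (x - y)) by lra.
    replace (o + hb L beta (ak d i) (/ INR d) (c i) x - (o + hb L beta (ak d j) (/ INR d) (c j) y))
      with (hb L beta (ak d i) (/ INR d) (c i) x + - hb L beta (ak d j) (/ INR d) (c j) y) by ring.
    eapply Rle_trans. apply Rabs_triang. rewrite Rabs_Ropp. nra.
Qed.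


Lemma pigeon : forall n d (g : nat -> nat), (forall i, (i < n)%nat -> (g i < d)%nat) -> (d < n)%nat ->
  exists i j, (i < n)%nat /\ (j < n)%nat /\ i <> j /\ g i = g j.
Proof.
  induction n as [|n IH]; intros d g Hg Hdn; [lia|].
  destruct (classic (exists i, (i < n)%nat /\ g i = g n)) as [[i [Hi Heq]]|Hno].
  - exists i, n. repeat split; auto; lia.
  - assert (Hd : (1 <= d)%nat) by (specialize (Hg n ltac:(lia)); lia).
    set (g' := fun i => if Nat.ltb (g i) (g n) then g i else (g i - 1)%nat).
    destruct (IH (d - 1)%nat g') as [i [j [Hi [Hj [Hij Heq]]]]].
    + intros i Hi. unfold g'. pose proof (Hg i ltac:(lia)). pose proof (Hg n ltac:(lia)).
      assert (g i <> g n) by (intro; apply Hno; eauto).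
      destruct (Nat.ltb_spec (g i) (g n)); lia.
    + lia.
    + exists i, j. repeat split; try lia; auto.
      assert (g i <> g n) by (intro; apply Hno; exists i; split; auto).
      assert (g j <> g n) by (intro; apply Hno; exists j; split; auto).
      unfold g' in Heq. destruct (Nat.ltb_spec (g i) (g n)); destruct (Nat.ltb_spec (g j) (g n)); lia.
Qed.

Lemma pdim_Fcls o L beta d : 0 < L -> 0 < beta -> (1 <= d)%nat -> pdim_eq (Fcls o L beta d) d.
Proof.
  intros HL Hb Hd. pose proof (INR_pos_d d Hd) as Hdpos.
  assert (HW : 0 < / INR d) by (apply Rinv_0_lt_compat; auto).
  split.
  - set (xs := fun k => ak d k + / INR d / 2).
    exists xs, (fun _ => o). split.
    + intros i Hi. unfold xs, in01. pose proof (ak_le d 0 i Hd ltac:(lia)). pose proof (ak_le d (S i) d Hd ltac:(lia)).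
      rewrite <- ak_W in H0 by auto.
      assert (ak d 0 = 0) by (unfold ak; simpl; unfold Rdiv; ring).
      assert (ak d d = 1) by (unfold ak; field; lra). lra.
    + intros b. set (c := fun k => if b k then xs k - 2*beta/L else xs k + 2*beta/L).
      exists (fv o L beta d c). split. exists c; auto.
      intros i Hi. rewrite (fv_block o L beta d c i (xs i)) by (auto; unfold xs; lra).
      assert (HE : 0 < Eb L beta (ak d i) (/ INR d) (xs i)).
      { unfold Eb, xs. replace (L * (ak d i + / INR d / 2 - ak d i)) with (L * (/INR d/2)) by (field; lra).
        replace (L * (ak d i + / INR d - (ak d i + / INR d / 2))) with (L * (/INR d/2)) by (field; lra).
        assert (0 < L * (/ INR d / 2)) by (apply Rmult_lt_0_compat; lra).
        unfold Rmax, Rmin; repeat destruct Rle_dec; lra. }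
      pose proof (Eb_bounds L beta (ak d i) (/ INR d) (xs i) ltac:(lra)).
      unfold hb, c. set (E := Eb L beta (ak d i) (/ INR d) (xs i)) in *.
      destruct (b i).
      * replace (L * (xs i - (xs i - 2 * beta / L))) with (2*beta) by (field; lra).
        unfold Rmax, Rmin; repeat destruct Rle_dec; split; intros; try lra; auto.
      * replace (L * (xs i - (xs i + 2 * beta / L))) with (-(2*beta)) by (field; lra).
        unfold Rmax, Rmin; repeat destruct Rle_dec; split; intros; try lra; discriminate.
  - intros n [xs [rs [Hin Hsh]]].
    destruct (Compare_dec.le_lt_dec n d) as [|Hlt]; auto. exfalso.
    set (g := fun i => epsilon (inhabits 0%nat) (fun k => (k < d)%nat /\ ak d k <= xs i <= ak d k + / INR d)).
    assert (Hg : forall i, (i < n)%nat -> (g i < d)%nat /\ ak d (g i) <= xs i <= ak d (g i) + / INR d).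
    { intros i Hi. unfold g. apply epsilon_spec. apply block_exists; auto. }
    destruct (pigeon n d g) as [i [j [Hi [Hj [Hij Heq]]]]]; auto.
    { intros i Hi; apply Hg; auto. }
    destruct (Hg i Hi) as [Hk Hxi]. destruct (Hg j Hj) as [_ Hxj]. rewrite <- Heq in Hxj.
    set (k := g i) in *.
    destruct (Hsh (fun l => Nat.eqb l i)) as [f1 [[c1 ->] H1]].
    destruct (Hsh (fun l => Nat.eqb l j)) as [f2 [[c2 ->] H2]].
    pose proof (proj2 (H1 i Hi) (Nat.eqb_refl i)) as A1.
    pose proof (proj2 (H2 j Hj) (Nat.eqb_refl j)) as A2.
    assert (B1 : ~ rs j <= fv o L beta d c1 (xs j)).
    { intro C. apply (proj1 (H1 j Hj)) in C. apply Nat.eqb_eq in C. auto. }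
    assert (B2 : ~ rs i <= fv o L beta d c2 (xs i)).
    { intro C. apply (proj1 (H2 i Hi)) in C. apply Nat.eqb_eq in C. auto. }
    rewrite (fv_block o L beta d c1 k) in A1, B1 by auto.
    rewrite (fv_block o L beta d c2 k) in A2, B2 by auto.
    destruct (Rle_dec (c1 k) (c2 k)).
    + pose proof (hb_mono L beta (ak d k) (/ INR d) (c1 k) (c2 k) (xs j) HL ltac:(lra) r). lra.
    + pose proof (hb_mono L beta (ak d k) (/ INR d) (c2 k) (c1 k) (xs i) HL ltac:(lra) ltac:(lra)). lra.
Qed.


Lemma cover_aux r : 0 < r -> forall n x, 0 <= x <= 1 -> x <= 2 * r * INR (S n) ->
  exists j, (j < S n)%nat /\ Rabs (x - Rmin 1 ((2 * INR j + 1) * r)) <= r.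
Proof.
  intros Hr. induction n as [|n IH]; intros x Hx Hxn.
  - exists 0%nat. split; [lia|]. simpl in *. unfold Rmin. destruct Rle_dec; apply Rabs_le; lra.
  - destruct (Rle_dec x (2 * r * INR (S n))) as [Hle|Hgt].
    + destruct (IH x Hx Hle) as [j [Hj Hj2]]. exists j; split; auto.
    + exists (S n). split; [lia|]. repeat rewrite S_INR in *.
      unfold Rmin. destruct Rle_dec; apply Rabs_le; nra.
Qed.

Lemma cover_bound r : 0 < r -> INR (covering_number01 r) - 1 <= / (2 * r).
Proof.
  intros Hr. set (z := up (/ (2 * r))). destruct (archimed (/ (2 * r))) as [A1 A2]. fold z in A1, A2.
  assert (Hpos : 0 < / (2 * r)) by (apply Rinv_0_lt_compat; lra).
  assert (Hz : (0 < z)%Z) by (apply lt_IZR; lra).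
  set (m := Z.to_nat z).
  assert (Hm : INR m = IZR z) by (unfold m; rewrite INR_IZR_INZ, Z2Nat.id; auto; lia).
  assert (Hm1 : (1 <= m)%nat) by (unfold m; lia).
  assert (covering_number01 r <= m)%nat.
  { unfold covering_number01. apply nat_min_le.
    exists (map (fun j => Rmin 1 ((2 * INR j + 1) * r)) (seq 0 m)). split; [|split].
    - rewrite length_map, length_seq; auto.
    - intros s Hs. apply in_map_iff in Hs. destruct Hs as [j [<- _]]. unfold in01, Rmin.
      pose proof (pos_INR j). destruct Rle_dec; nra.
    - intros x Hx. destruct m as [|m']; [lia|].
      destruct (cover_aux r Hr m' x Hx) as [j [Hj Hj2]].
      + rewrite Hm. assert (1 <= 2 * r * IZR z).
        { apply Rmult_lt_compat_l with (r := 2 * r) in A1; [|lra]. rewrite Rinv_r in A1; lra. }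
        destruct Hx; lra.
      + exists (Rmin 1 ((2 * INR j + 1) * r)). split; auto. apply in_map_iff. exists j. split; auto.
        apply in_seq. lia. }
  apply le_INR in H. lra.
Qed.


Lemma h_pos k : 0 < (/2) ^ k.
Proof. apply pow_lt; lra. Qed.
Lemma h_le1 k : (/2) ^ k <= 1.
Proof. induction k; simpl; [lra|]. pose proof (h_pos k). nra. Qed.
Lemma h_add a b : (/2) ^ (a + b) = (/2)^a * (/2)^b.
Proof. apply pow_add. Qed.
Lemma h_mono a b : (a <= b)%nat -> (/2)^b <= (/2)^a.
Proof. intros H. replace b with (a + (b - a))%nat by lia. rewrite h_add.
  pose proof (h_pos a). pose proof (h_le1 (b - a)). nra. Qed.

Lemma geom W n : sumR n (fun j => W * (/2)^(S j)) = W - W * (/2)^n.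
Proof. induction n; cbn [sumR]. simpl; lra. rewrite IHn. simpl. lra. Qed.

Lemma geom_shift W s n : sumR n (fun j => W * (/2)^(S (s + j))) = W * (/2)^s - W * (/2)^(s + n).
Proof.
  rewrite (sumR_ext n _ (fun j => (W * (/2)^s) * (/2)^(S j))).
  rewrite geom. rewrite h_add. ring.
  intros j _. replace (S (s + j)) with (s + S j)%nat by lia. rewrite h_add. ring.
Qed.

Definition bsum (W : R) (b : nat -> bool) (i : nat) :=
  sumR i (fun j => if b j then W * (/2)^(S j) else 0).

Lemma bsum_bounds W b i : 0 <= W -> 0 <= bsum W b i <= W - W * (/2)^i.
Proof.
  intros HW. unfold bsum. split.
  - apply sumR_nonneg. intros k _. destruct (b k); [|lra]. pose proof (h_pos (S k)). nra.
  - rewrite <- geom. apply sumR_le. intros k _. destruct (b k); [lra|]. pose proof (h_pos (S k)). nra.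
Qed.

Lemma bsum_split W b i D : 0 <= W -> (i < D)%nat ->
  exists tail, bsum W b D = bsum W b i + (if b i then W * (/2)^(S i) else 0) + tail /\
    0 <= tail <= W * (/2)^(S i) - W * (/2)^D.
Proof.
  intros HW HiD.
  exists (sumR (D - S i) (fun j => if b (i + (1 + j))%nat then W * (/2)^(S (i + (1 + j))) else 0)).
  split.
  - unfold bsum. assert (ED : D = (i + (1 + (D - S i)))%nat) by lia.
    rewrite ED at 1. rewrite sumR_app, sumR_app. cbn [sumR]. rewrite Nat.add_0_r. ring.
  - split.
    + apply sumR_nonneg. intros k _. destruct (b _); [|lra]. pose proof (h_pos (S (i + (1 + k)))). nra.
    + replace (W * (/2)^(S i) - W * (/2)^D) with (W * (/2)^(S i) - W * (/2)^(S i + (D - S i))).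
      rewrite <- geom_shift. apply sumR_le. intros k _. replace (S (i + (1 + k))) with (S (S i + k)) by lia.
      destruct (b _); [lra|]. pose proof (h_pos (S (S i + k))). nra.
      replace (S i + (D - S i))%nat with D by lia. auto.
Qed.

Lemma query_geom (W a : R) (b : nat -> bool) (i D : nat) : 0 < W -> (i < D)%nat ->
  let lo := a + bsum W b i in
  let q := lo + W * (/2)^(S i) - W * (/2)^(S D) in
  let cs := a + bsum W b D in
  let delta := W * (/2)^(S D) in
  a + delta <= q <= a + W - delta /\
  (b i = false -> cs <= q - delta) /\ (b i = true -> q + delta <= cs).
Proof.
  intros HW HiD lo q cs delta.
  assert (Hd2 : W * (/2)^D = 2 * delta) by (unfold delta; simpl; field).
  destruct (bsum_bounds W b i ltac:(lra)) as [B1 B2].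
  destruct (bsum_split W b i D ltac:(lra) HiD) as [tl [Htl [T1 T2]]].
  pose proof (h_mono (S i) D ltac:(lia)). pose proof (h_pos D).
  assert (W * (/2)^D <= W * (/2)^(S i)) by nra.
  assert (Hsi : (/2)^(S i) = /2 * (/2)^i) by (simpl; auto).
  assert (0 < delta) by (unfold delta; pose proof (h_pos (S D)); nra).
  assert (Hdel : delta = W * (/2)^(S D)) by reflexivity. clearbody delta.
  unfold q, lo, cs. repeat split.
  - lra.
  - rewrite Hsi in *. nra.
  - intros Hb. rewrite Htl, Hb. lra.
  - intros Hb. rewrite Htl, Hb. lra.
Qed.


Definition Sfull m (ys : nat -> bool) p := sumR m (fun j => lab (ys (p*m + j)%nat)).
Definition bitf m ys p : bool := if Rle_dec 0 (Sfull m ys p) then false else true.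
Definition blkbits D m ys k := fun i => bitf m ys (k*D + i)%nat.
Definition qpt d D m ys k i :=
  ak d k + bsum (/INR d) (blkbits D m ys k) i + (/INR d) * (/2)^(S i) - (/INR d) * (/2)^(S D).
Definition cstar d D m ys k := ak d k + bsum (/INR d) (blkbits D m ys k) D.
Definition ph n m t := if Nat.ltb t (n*m) then (t / m)%nat else 0%nat.
Definition xsf d D m ys t := qpt d D m ys (ph (d*D) m t / D) (ph (d*D) m t mod D).

Lemma fstar_val L beta d D m ys k i : 0 < L -> 0 < beta -> (1 <= d)%nat -> (k < d)%nat -> (i < D)%nat ->
  beta <= L * (/INR d * (/2)^(S D)) ->
  fv 0 L beta d (cstar d D m ys) (qpt d D m ys k i) = if bitf m ys (k*D+i)%nat then -beta else beta.
Proof.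
  intros HL Hb Hd Hk Hi Hdel. pose proof (INR_pos_d d Hd).
  assert (HW : 0 < / INR d) by (apply Rinv_0_lt_compat; auto).
  destruct (query_geom (/INR d) (ak d k) (blkbits D m ys k) i D HW Hi) as [[Q1 Q2] [C1 C2]].
  cbv zeta in Q1, Q2, C1, C2.
  set (delta := / INR d * (/ 2) ^ S D) in *.
  assert (0 < delta) by (unfold delta; pose proof (h_pos (S D)); nra).
  assert (Hq : qpt d D m ys k i = ak d k + bsum (/ INR d) (blkbits D m ys k) i + / INR d * (/ 2) ^ S i - delta) by reflexivity.
  rewrite <- Hq in Q1, Q2, C1, C2. fold (cstar d D m ys k) in C1, C2.
  rewrite (fv_block 0 L beta d _ k); auto; [|split; lra].
  assert (HE : Eb L beta (ak d k) (/ INR d) (qpt d D m ys k i) = beta).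
  { unfold Eb. assert (beta <= L * (qpt d D m ys k i - ak d k)) by nra.
    assert (beta <= L * (ak d k + / INR d - qpt d D m ys k i)) by nra.
    unfold Rmax, Rmin; repeat destruct Rle_dec; lra. }
  unfold hb. rewrite HE. unfold blkbits in C1, C2.
  destruct (bitf m ys (k * D + i)).
  - specialize (C2 eq_refl). assert (L * (qpt d D m ys k i - cstar d D m ys k) <= - beta) by nra.
    unfold Rmax, Rmin; repeat destruct Rle_dec; lra.
  - specialize (C1 eq_refl). assert (beta <= L * (qpt d D m ys k i - cstar d D m ys k)) by nra.
    unfold Rmax, Rmin; repeat destruct Rle_dec; lra.
Qed.

Definition agree (ys ys' : nat -> bool) t := forall s, (s < t)%nat -> ys s = ys' s.

Lemma Sfull_loc m ys ys' p : agree ys ys' (S p * m) -> Sfull m ys p = Sfull m ys' p.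
Proof. intros H. unfold Sfull. apply sumR_ext. intros j Hj. rewrite H; auto. simpl. nia. Qed.

Lemma bitf_loc m ys ys' p : agree ys ys' (S p * m) -> bitf m ys p = bitf m ys' p.
Proof. intros H. unfold bitf. rewrite (Sfull_loc m ys ys' p H). auto. Qed.

Lemma bsum_loc d D m ys ys' k i : agree ys ys' ((k*D + i) * m) ->
  bsum (/INR d) (blkbits D m ys k) i = bsum (/INR d) (blkbits D m ys' k) i.
Proof. intros H. unfold bsum, blkbits. apply sumR_ext. intros j Hj.
  rewrite (bitf_loc m ys ys'); auto. intros s Hs. apply H. nia. Qed.

Lemma qpt_loc d D m ys ys' k i : agree ys ys' ((k*D + i) * m) -> qpt d D m ys k i = qpt d D m ys' k i.
Proof. intros H. unfold qpt. rewrite (bsum_loc d D m ys ys' k i H). auto. Qed.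

Lemma ph_le n m t : (ph n m t * m <= t)%nat.
Proof. unfold ph. destruct (Nat.ltb t (n*m)); [|lia].
  destruct m; [simpl; lia|]. rewrite Nat.mul_comm. apply Nat.Div0.mul_div_le. Qed.

Lemma xsf_loc d D m ys ys' t : (1 <= D)%nat -> agree ys ys' t -> xsf d D m ys t = xsf d D m ys' t.
Proof. intros HD H. unfold xsf. apply qpt_loc. intros s Hs. apply H.
  pose proof (ph_le (d*D) m t). pose proof (Nat.div_mod (ph (d*D) m t) D ltac:(lia)).
  rewrite (Nat.mul_comm (ph (d * D) m t / D) D) in Hs. rewrite <- H1 in Hs. lia. Qed.

Lemma history_loc xs xs' ys ys' t : (forall s, (s < t)%nat -> xs s = xs' s) -> agree ys ys' t ->
  history xs ys t = history xs' ys' t.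
Proof. intros H1 H2. unfold history. apply map_ext_in. intros s Hs. apply in_seq in Hs.
  rewrite H1, H2 by lia. auto. Qed.

Definition mistf (A : learner) d D m ys t := exp_mistake A (xsf d D m ys) ys t.

Lemma mist_loc A d D m ys ys' t : (1 <= D)%nat -> agree ys ys' (S t) -> mistf A d D m ys t = mistf A d D m ys' t.
Proof. intros HD H. unfold mistf, exp_mistake.
  rewrite (history_loc (xsf d D m ys) (xsf d D m ys') ys ys' t).
  rewrite (xsf_loc d D m ys ys' t HD). rewrite (H t) by lia. auto.
  intros s Hs; apply H; lia.
  intros s Hs; apply xsf_loc; auto; intros s' Hs'; apply H; lia.
  intros s Hs; apply H; lia.
Qed.

Definition upd (ys : nat -> bool) t y := fun s => if Nat.eqb s t then y else ys s.

Lemma upd_agree ys t y : agree (upd ys t y) ys t.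
Proof. intros s Hs. unfold upd. destruct (Nat.eqb_spec s t); auto; lia. Qed.

Lemma mist_sum A d D m ys t : (1 <= D)%nat -> valid_learner A ->
  mistf A d D m (upd ys t true) t + mistf A d D m (upd ys t false) t = 1.
Proof. intros HD HA. unfold mistf, exp_mistake.
  rewrite (history_loc (xsf d D m (upd ys t true)) (xsf d D m ys) (upd ys t true) ys t).
  rewrite (history_loc (xsf d D m (upd ys t false)) (xsf d D m ys) (upd ys t false) ys t).
  rewrite (xsf_loc d D m (upd ys t true) ys t), (xsf_loc d D m (upd ys t false) ys t); auto using upd_agree.
  unfold upd. rewrite Nat.eqb_refl. ring.
  all: try apply upd_agree.
  all: intros s Hs; apply xsf_loc; auto; intros s' Hs'; apply upd_agree; lia.
Qed.

Definition U (sg s r : R) := (s^2 + r)/sg - 4/27 * (s^4 + 6*r*s^2 + 3*r^2 - 2*r)/sg^3.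

Lemma U_mart sg s r : 0 < sg -> U sg (s+1) (r-1) + U sg (s-1) (r-1) = 2 * U sg s r.
Proof. intros. unfold U. field. lra. Qed.

Lemma U_final sg s : 0 < sg -> U sg s 0 <= Rabs s.
Proof. intros Hs. unfold U.
  assert (Hk : forall a, 0 <= a -> a^2/sg - 4/27*(a^4 + 6*0*a^2 + 3*0^2 - 2*0)/sg^3 <= a).
  { intros a Ha. assert (a - (a^2/sg - 4/27*(a^4 + 6*0*a^2 + 3*0^2 - 2*0)/sg^3) =
       (a / sg^3) * (4/27) * ((a - 3*sg/2)^2 * (a + 3*sg))) by (field; lra).
    assert (0 <= (a / sg^3) * (4/27) * ((a - 3*sg/2)^2 * (a + 3*sg))).
    { apply Rmult_le_pos. apply Rmult_le_pos. unfold Rdiv. apply Rmult_le_pos; auto.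
      left; apply Rinv_0_lt_compat; apply pow_lt; auto. lra.
      apply Rmult_le_pos. apply pow2_ge_0. lra. }
    lra. }
  replace (s^2) with ((Rabs s)^2) by (rewrite <- Rsqr_pow2, <- Rsqr_abs, Rsqr_pow2; auto).
  replace (s^4) with ((Rabs s)^4). rewrite Rplus_0_r. apply Hk, Rabs_pos.
  unfold Rabs; destruct Rcase_abs; ring.
Qed.

Lemma U_start sg m : 0 < sg -> sg^2 = m -> 0 <= m -> 5/9 * sg <= U sg 0 m.
Proof. intros Hs Hm Hm0. unfold U. subst m.
  replace ((0 ^ 2 + sg ^ 2) / sg - 4 / 27 * (0 ^ 4 + 6 * sg ^ 2 * 0 ^ 2 + 3 * (sg ^ 2) ^ 2 - 2 * sg ^ 2) / sg ^ 3)
    with (5/9 * sg + 8/27 / sg) by (field; lra).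
  assert (0 < 8/27/sg) by (unfold Rdiv; apply Rmult_lt_0_compat; [lra|apply Rinv_0_lt_compat; auto]). lra.
Qed.


Definition Spart m (ys : nat -> bool) p t := sumR (Nat.min m (t - p*m)) (fun j => lab (ys (p*m + j)%nat)).
Definition Phi A d D m sg t ys :=
  sumR t (fun s => mistf A d D m ys s - /2) +
  /2 * sumR (d*D) (fun p => U sg (Spart m ys p t) (INR (m - Nat.min m (t - p*m)))).

Lemma U_step m sg ys t p : 0 < sg ->
  U sg (Spart m (upd ys t true) p (S t)) (INR (m - Nat.min m (S t - p*m))) +
  U sg (Spart m (upd ys t false) p (S t)) (INR (m - Nat.min m (S t - p*m))) =
  2 * U sg (Spart m ys p t) (INR (m - Nat.min m (t - p*m))).
Proof.
  intros Hsg. destruct (classic (p*m <= t < p*m + m)%nat) as [Hin|Hout].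
  - unfold Spart. replace (Nat.min m (S t - p*m)) with (S (t - p*m)) by lia.
    replace (Nat.min m (t - p*m)) with (t - p*m)%nat by lia.
    cbn [sumR].
    assert (E : forall y, sumR (t - p*m) (fun j => lab (upd ys t y (p*m + j)%nat)) = sumR (t - p*m) (fun j => lab (ys (p*m + j)%nat))).
    { intros y. apply sumR_ext. intros j Hj. rewrite upd_agree by lia. auto. }
    rewrite !E. unfold upd. replace (p * m + (t - p * m))%nat with t by lia. rewrite Nat.eqb_refl.
    assert (INR (m - (t - p*m)) = INR (m - S (t - p*m)) + 1).
    { replace (m - (t - p*m))%nat with (S (m - S (t - p*m))) by lia. apply S_INR. }
    rewrite H. set (r := INR (m - S (t - p * m))). set (S0 := sumR (t - p * m) (fun j => lab (ys (p * m + j)%nat))).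
    pose proof (U_mart sg S0 (r+1) Hsg) as M. replace (r + 1 - 1) with r in M by ring.
    simpl lab. replace (S0 + -1) with (S0 - 1) by ring. lra.
  - assert (Hmin : Nat.min m (S t - p*m) = Nat.min m (t - p*m)) by lia.
    rewrite Hmin. unfold Spart. rewrite Hmin.
    assert (E : forall y, sumR (Nat.min m (t - p*m)) (fun j => lab (upd ys t y (p*m + j)%nat)) = sumR (Nat.min m (t - p*m)) (fun j => lab (ys (p*m + j)%nat))).
    { intros y. apply sumR_ext. intros j Hj. rewrite upd_agree by lia. auto. }
    rewrite !E. ring.
Qed.

Lemma Phi_step A d D m sg t ys : (1 <= D)%nat -> valid_learner A -> 0 < sg ->
  Phi A d D m sg (S t) (upd ys t true) + Phi A d D m sg (S t) (upd ys t false) = 2 * Phi A d D m sg t ys.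
Proof.
  intros HD HA Hsg. unfold Phi. cbn [sumR].
  assert (E : forall y, sumR t (fun s => mistf A d D m (upd ys t y) s - /2) = sumR t (fun s => mistf A d D m ys s - /2)).
  { intros y. apply sumR_ext. intros s Hs. rewrite (mist_loc A d D m (upd ys t y) ys s HD); auto.
    intros s' Hs'. apply upd_agree. lia. }
  rewrite !E. pose proof (mist_sum A d D m ys t HD HA).
  assert (E2 : sumR (d*D) (fun p => U sg (Spart m (upd ys t true) p (S t)) (INR (m - Nat.min m (S t - p*m)))) +
               sumR (d*D) (fun p => U sg (Spart m (upd ys t false) p (S t)) (INR (m - Nat.min m (S t - p*m)))) =
               2 * sumR (d*D) (fun p => U sg (Spart m ys p t) (INR (m - Nat.min m (t - p*m))))).
  { rewrite <- sumR_plus, <- sumR_scal. apply sumR_ext. intros p _. apply U_step; auto. }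
  lra.
Qed.

Lemma greedy (Phi0 : nat -> (nat -> bool) -> R) (N : nat) :
  (forall t ys, Phi0 (S t) (upd ys t true) + Phi0 (S t) (upd ys t false) >= 2 * Phi0 t ys) ->
  forall ys0, exists ys, Phi0 N ys >= Phi0 0%nat ys0.
Proof.
  intros H ys0. induction N as [|N IH]. exists ys0; lra.
  destruct IH as [ys Hys]. specialize (H N ys).
  destruct (Rle_dec (Phi0 (S N) (upd ys N false)) (Phi0 (S N) (upd ys N true))).
  - exists (upd ys N true). lra.
  - exists (upd ys N false). lra.
Qed.

Lemma Phi_loc A d D m sg t ys ys' : (1 <= D)%nat -> agree ys ys' t -> Phi A d D m sg t ys = Phi A d D m sg t ys'.
Proof.
  intros HD H. unfold Phi. f_equal.
  - apply sumR_ext. intros s Hs. rewrite (mist_loc A d D m ys ys' s HD); auto. intros s' Hs'; apply H; lia.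
  - f_equal. apply sumR_ext. intros p _. unfold Spart. f_equal. apply sumR_ext. intros j Hj. rewrite H by lia. auto.
Qed.

Lemma Phi_0 A d D m sg ys : Phi A d D m sg 0 ys = /2 * (INR (d*D) * U sg 0 (INR m)).
Proof.
  unfold Phi. cbn [sumR]. rewrite Rplus_0_l. f_equal. rewrite <- sumR_const. apply sumR_ext. intros p _.
  unfold Spart. rewrite Nat.sub_0_l, Nat.min_0_r, Nat.sub_0_r. cbn [sumR]. auto.
Qed.


Lemma ph_bound d D m t : (1 <= d)%nat -> (1 <= D)%nat -> (ph (d*D) m t / D < d)%nat /\ (ph (d*D) m t mod D < D)%nat.
Proof.
  intros Hd HD. split; [|apply Nat.mod_upper_bound; lia].
  apply Nat.Div0.div_lt_upper_bound. unfold ph.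
  destruct (Nat.ltb_spec t (d*D*m)).
  - destruct m as [|m]; [lia|]. rewrite Nat.mul_comm. apply Nat.Div0.div_lt_upper_bound. nia.
  - nia.
Qed.

Lemma qpt_in01 d D m ys k i : (1 <= d)%nat -> (k < d)%nat -> (i < D)%nat -> in01 (qpt d D m ys k i).
Proof.
  intros Hd Hk Hi. pose proof (INR_pos_d d Hd).
  assert (HW : 0 < / INR d) by (apply Rinv_0_lt_compat; auto).
  destruct (query_geom (/INR d) (ak d k) (blkbits D m ys k) i D HW Hi) as [[Q1 Q2] _].
  cbv zeta in Q1, Q2. pose proof (h_pos (S D)).
  assert (0 < / INR d * (/2)^(S D)) by nra.
  pose proof (ak_le d 0 k Hd ltac:(lia)). pose proof (ak_le d (S k) d Hd ltac:(lia)).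
  rewrite <- ak_W in H3 by auto.
  assert (ak d 0 = 0) by (unfold ak; simpl; unfold Rdiv; ring).
  assert (ak d d = 1) by (unfold ak; field; lra).
  unfold qpt, in01. split; lra.
Qed.

Lemma xsf_in01 d D m ys t : (1 <= d)%nat -> (1 <= D)%nat -> in01 (xsf d D m ys t).
Proof. intros Hd HD. destruct (ph_bound d D m t Hd HD). unfold xsf. apply qpt_in01; auto. Qed.

Lemma mist_bounds A d D m ys t : valid_learner A -> 0 <= mistf A d D m ys t <= 1.
Proof. intros HA. unfold mistf, exp_mistake. destruct (HA (history (xsf d D m ys) ys t) (xsf d D m ys t)).
  destruct (ys t); lra. Qed.

Lemma phase_sum m (ys : nat -> bool) p (g : nat -> R) beta gamma : 0 < gamma < beta ->
  (forall j, (j < m)%nat -> g j = if Rle_dec (lab (ys (p*m+j)%nat) * (if bitf m ys p then -beta else beta)) gamma then 1 else 0) ->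
  sumR m g = (INR m - Rabs (Sfull m ys p)) / 2.
Proof.
  intros Hg H. unfold bitf in H. unfold Sfull in *.
  set (S0 := sumR m (fun j => lab (ys (p * m + j)%nat))) in *.
  destruct (Rle_dec 0 S0) as [Hs|Hs].
  - rewrite (sumR_ext m g (fun j => (1 - lab (ys (p*m+j)%nat)) / 2)).
    + unfold Rdiv. rewrite (sumR_ext m _ (fun j => /2 * 1 + (-/2) * lab (ys (p*m+j)%nat))) by (intros; ring).
      rewrite sumR_plus, sumR_scal, sumR_scal, sumR_const. fold S0. rewrite Rabs_right by lra. lra.
    + intros j Hj. rewrite H by auto. destruct (ys (p*m+j)%nat); simpl lab; repeat destruct Rle_dec; lra.
  - rewrite (sumR_ext m g (fun j => (1 + lab (ys (p*m+j)%nat)) / 2)).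
    + unfold Rdiv. rewrite (sumR_ext m _ (fun j => /2 * 1 + (/2) * lab (ys (p*m+j)%nat))) by (intros; ring).
      rewrite sumR_plus, sumR_scal, sumR_scal, sumR_const. fold S0. rewrite Rabs_left by lra. lra.
    + intros j Hj. rewrite H by auto. destruct (ys (p*m+j)%nat); simpl lab; repeat destruct Rle_dec; lra.
Qed.

Lemma main_game (A : learner) L gamma d D T : 0 < L -> 0 < gamma -> (1 <= d)%nat -> (1 <= D)%nat ->
  5/4*gamma <= L * (/INR d * (/2)^(S D)) -> (d * D <= T)%nat -> valid_learner A ->
  exists (xs : nat -> R) (ys : nat -> bool), (forall t, in01 (xs t)) /\
    expected_mistakes A xs ys T - INR (OPT_margin (Fcls 0 L (5/4*gamma) d) gamma xs ys T)
      >= 5/18 * INR (d*D) * sqrt (INR (T / (d*D))).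
Proof.
  intros HL Hg Hd HD Hdel HT HA.
  set (n := (d*D)%nat) in *. set (m := (T / n)%nat). set (beta := 5/4*gamma) in *.
  assert (Hn : (1 <= n)%nat) by (unfold n; nia).
  assert (Hm : (1 <= m)%nat) by (apply Nat.div_str_pos; lia).
  assert (Hnm : (n * m <= T)%nat) by (apply Nat.Div0.mul_div_le).
  set (sg := sqrt (INR m)).
  assert (Hmpos : 0 < INR m) by (apply lt_0_INR; lia).
  assert (Hsg : 0 < sg) by (apply sqrt_lt_R0; auto).
  assert (Hsg2 : sg ^ 2 = INR m) by (unfold sg; rewrite <- Rsqr_pow2; apply Rsqr_sqrt; lra).
  destruct (greedy (Phi A d D m sg) (n*m)) with (ys0 := fun _ : nat => true) as [ysg Hysg].
  { intros t ys. rewrite Phi_step; auto. lra. }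
  rewrite Phi_0 in Hysg.
  set (ysf := fun t => if Nat.ltb t (n*m) then ysg t else negb (bitf m ysg 0)).
  assert (Hag : agree ysf ysg (n*m)).
  { intros s Hs. unfold ysf. destruct (Nat.ltb_spec s (n*m)); auto; lia. }
  rewrite <- (Phi_loc A d D m sg (n*m) ysf ysg HD Hag) in Hysg.
  exists (xsf d D m ysf), ysf. split. intros t; apply xsf_in01; auto.
  assert (Hloss : expected_mistakes A (xsf d D m ysf) ysf T >= sumR (n*m) (mistf A d D m ysf)).
  { unfold expected_mistakes. change (exp_mistake A (xsf d D m ysf) ysf) with (mistf A d D m ysf).
    replace T with (n*m + (T - n*m))%nat by lia. rewrite sumR_app.
    assert (0 <= sumR (T - n*m) (fun j => mistf A d D m ysf (n*m + j)%nat)).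
    { apply sumR_nonneg. intros; apply mist_bounds; auto. }
    lra. }
  assert (HPhi : Phi A d D m sg (n*m) ysf <= sumR (n*m) (mistf A d D m ysf) - INR (n*m) / 2
                 + /2 * sumR n (fun p => Rabs (Sfull m ysf p))).
  { unfold Phi. fold n. rewrite (sumR_ext (n*m) _ (fun s => mistf A d D m ysf s + (-/2))) by (intros; ring).
    rewrite sumR_plus, sumR_const.
    assert (sumR n (fun p => U sg (Spart m ysf p (n*m)) (INR (m - Nat.min m (n*m - p*m)))) <=
            sumR n (fun p => Rabs (Sfull m ysf p))).
    { apply sumR_le. intros p Hp. replace (Nat.min m (n*m - p*m)) with m by nia.
      rewrite Nat.sub_diag. simpl INR. unfold Spart. replace (Nat.min m (n*m - p*m)) with m by nia.
      apply U_final; auto. }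
    lra. }
  set (fstar := fv 0 L beta d (cstar d D m ysf)).
  assert (HOPT : (OPT_margin (Fcls 0 L beta d) gamma (xsf d D m ysf) ysf T <= margin_loss gamma fstar (xsf d D m ysf) ysf T)%nat).
  { unfold OPT_margin. apply nat_min_le. exists fstar. split; auto. exists (cstar d D m ysf). auto. }
  apply le_INR in HOPT. rewrite margin_loss_sum in HOPT.
  assert (Hbg : 0 < gamma < beta) by (unfold beta; lra).
  assert (Hb0 : 0 < beta) by lra.
  assert (Hind : sumR T (fun t => if Rle_dec (lab (ysf t) * fstar (xsf d D m ysf t)) gamma then 1 else 0)
                 = sumR n (fun p => (INR m - Rabs (Sfull m ysf p)) / 2)).
  { replace T with (n*m + (T - n*m))%nat at 1 by lia. rewrite sumR_app.
    rewrite (sumR_ext (T - n*m) _ (fun _ => 0)).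
    2:{ intros j Hj. assert (Hph : ph n m (n*m + j) = 0%nat).
        { unfold ph. destruct (Nat.ltb_spec (n*m+j) (n*m)); auto; lia. }
        unfold xsf. fold n. rewrite Hph. rewrite Nat.Div0.div_0_l, Nat.Div0.mod_0_l.
        unfold fstar. rewrite fstar_val; auto; try lia.
        assert (Hy : ysf (n*m+j)%nat = negb (bitf m ysf 0)).
        { rewrite (bitf_loc m ysf ysg 0) by (intros s Hs; apply Hag; nia).
          unfold ysf. destruct (Nat.ltb_spec (n*m+j) (n*m)); [lia|]. auto. }
        rewrite Hy. simpl (0 * D + 0)%nat. destruct (bitf m ysf 0); simpl lab; destruct Rle_dec; lra. }
    rewrite sumR_const, Rmult_0_r, Rplus_0_r, sumR_mul.
    apply sumR_ext. intros p Hp. apply (phase_sum m ysf p _ beta gamma Hbg).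
    intros j Hj. assert (Hph : ph n m (p*m + j) = p).
    { unfold ph. destruct (Nat.ltb_spec (p*m+j) (n*m)); [|nia].
      rewrite Nat.div_add_l by lia. rewrite Nat.div_small by lia. lia. }
    unfold xsf. fold n. rewrite Hph. unfold fstar. rewrite fstar_val; auto.
    - replace (p / D * D + p mod D)%nat with p; auto. rewrite Nat.mul_comm. apply Nat.div_mod_eq.
    - apply Nat.Div0.div_lt_upper_bound. unfold n in Hp. lia.
    - apply Nat.mod_upper_bound. lia. }
  rewrite Hind in HOPT.
  assert (Hsum : sumR n (fun p => (INR m - Rabs (Sfull m ysf p)) / 2) = INR (n*m)/2 - /2 * sumR n (fun p => Rabs (Sfull m ysf p))).
  { rewrite (sumR_ext n _ (fun p => /2 * INR m + (-/2) * Rabs (Sfull m ysf p))) by (intros; unfold Rdiv; ring).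
    rewrite sumR_plus, sumR_scal, sumR_scal, sumR_const, mult_INR. field. }
  pose proof (U_start sg (INR m) Hsg Hsg2 ltac:(lra)).
  assert (0 <= INR n) by apply pos_INR.
  assert (INR n * (5/9 * sg) <= INR n * U sg 0 (INR m)) by (apply Rmult_le_compat_l; auto).
  fold n in Hysg. assert (5 / 18 * INR n * sg = /2 * (INR n * (5 / 9 * sg))) by field. lra.
Qed.


Lemma exists_D a b : (1 <= b)%nat -> (b <= a)%nat -> exists D, (b * 2^D <= a < b * 2^(S D))%nat.
Proof.
  intros Hb Hba.
  assert (Hex : (a < b * 2^a)%nat) by (pose proof (Nat.pow_gt_lin_r 2 a ltac:(lia)); nia).
  destruct (wf_min (fun D => (a < b * 2^D)%nat) a Hex) as [D0 [HD0 Hmin]].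
  destruct D0 as [|D]. simpl in HD0; lia.
  exists D. split; auto. destruct (Compare_dec.le_lt_dec (b * 2^D) a); auto. specialize (Hmin D l). lia.
Qed.

Lemma ln2_lt1 : ln 2 < 1.
Proof. rewrite <- ln_exp. apply ln_increasing; [lra|]. pose proof (exp_ineq1 1 ltac:(lra)). lra. Qed.

Lemma s_bound : 5/2 <= sqrt (32 / PI).
Proof.
  pose proof PI_4. pose proof PI_RGT_0.
  assert (6.25 <= 32 / PI).
  { apply Rmult_le_reg_r with PI; auto. unfold Rdiv. rewrite Rmult_assoc, Rinv_l by lra. lra. }
  replace (5/2) with (sqrt ((5/2)^2)) by (apply sqrt_pow2; lra).
  apply sqrt_le_1_alt. lra.
Qed.

Theorem theorem13 :
  exists c : R, 0 < c /\
  forall (gamma L : R) (d : nat),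
    0 < gamma < 1/2 -> 0 < L ->
    let N := covering_number01 (sqrt (32 / PI) * (gamma / L)) in
    (1 <= d)%nat -> (d <= N)%nat ->
    exists F : (R -> R) -> Prop,
      (forall f, F f ->
         (forall x, in01 x -> -1 <= f x <= 1) /\
         (forall x y, in01 x -> in01 y -> Rabs (f x - f y) <= L * Rabs (x - y))) /\
      pdim_eq F d /\
      exists T0 : nat, forall T : nat, (T0 <= T)%nat ->
      forall A : learner, valid_learner A ->
      exists (xs : nat -> R) (ys : nat -> bool),
        (forall t, in01 (xs t)) /\
        expected_mistakes A xs ys T - INR (OPT_margin F gamma xs ys T)
          >= c * sqrt (INR T * INR d * ln (INR N / INR d)).
Proof.
  exists (1/10). split; [lra|].
  intros gamma L d Hg HL N Hd HdN.
  pose proof (INR_pos_d d Hd) as Hdpos.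
  destruct (Compare_dec.le_lt_dec N d) as [HNd|HNd].
  -
    assert (HN : N = d) by lia.
    set (eps := (1/2 - gamma)/2).
    exists (Fcls (1/2) L eps d). split; [|split].
    + intros f [c ->]. split.
      * intros x Hx. pose proof (fv_bounds (1/2) L eps d c x HL ltac:(unfold eps; lra) Hd Hx). unfold eps in *. lra.
      * intros x y Hx Hy. apply fv_lip; auto. unfold eps; lra.
    + apply pdim_Fcls; auto. unfold eps; lra.
    + exists 0%nat. intros T _ A HA. exists (fun _ => 0), (fun _ => true). split.
      { intros; unfold in01; lra. }
      replace (INR N / INR d) with 1 by (rewrite HN; field; lra). rewrite ln_1, Rmult_0_r, sqrt_0, Rmult_0_r.
      assert (H0 : (OPT_margin (Fcls (1/2) L eps d) gamma (fun _ => 0%R) (fun _ => true) T <=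
                   margin_loss gamma (fv (1/2)%R L eps d (fun _ => 0%R)) (fun _ => 0%R) (fun _ => true) T)%nat).
      { apply nat_min_le. exists (fv (1/2) L eps d (fun _ => 0)). split; auto. exists (fun _ => 0). auto. }
      apply le_INR in H0. rewrite margin_loss_sum in H0.
      rewrite (sumR_ext T (fun t => if Rle_dec (lab true * fv (1/2) L eps d (fun _ => 0) 0) gamma then 1 else 0) (fun _ => 0)) in H0.
      2:{ intros t _. pose proof (fv_bounds (1/2) L eps d (fun _ => 0) 0 HL ltac:(unfold eps; lra) Hd ltac:(unfold in01; lra)).
          simpl lab in *. destruct Rle_dec; auto. unfold eps in *. lra. }
      rewrite sumR_const, Rmult_0_r in H0.
      assert (0 <= expected_mistakes A (fun _ => 0) (fun _ => true) T).
      { unfold expected_mistakes. apply sumR_nonneg. intros k _. unfold exp_mistake.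
        destruct (HA (history (fun _ => 0) (fun _ => true) k) 0). lra. }
      lra.
  -
    set (s := sqrt (32 / PI)) in *. pose proof s_bound as Hs. fold s in Hs.
    assert (Hr : 0 < s * (gamma / L)) by (apply Rmult_lt_0_compat; [lra|unfold Rdiv; apply Rmult_lt_0_compat; [lra|apply Rinv_0_lt_compat; lra]]).
    pose proof (cover_bound _ Hr) as HN. fold N in HN.
    destruct (exists_D (2 * (N - 1)) (2 * d) ltac:(lia) ltac:(lia)) as [D' [HD1 HD2]].
    set (D := S D').
    assert (HD : (1 <= D)%nat) by (unfold D; lia).
    assert (HK1 : (d * 2^D <= 2 * (N - 1))%nat) by (unfold D; simpl; lia).
    assert (HK2 : (2 * (N - 1) < d * 2^(S D))%nat) by (unfold D; simpl Nat.pow; simpl in HD2; lia).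
    set (beta := 5/4*gamma).
    assert (HN1 : INR (N - 1) = INR N - 1) by (rewrite minus_INR by lia; simpl; ring).
    assert (Hdel : beta <= L * (/INR d * (/2)^(S D))).
    { apply le_INR in HK1. rewrite mult_INR, pow_INR, mult_INR, HN1 in HK1. simpl INR in HK1.
      replace (1 + 1) with 2 in HK1 by ring.
      rewrite pow_inv. change (2 ^ S D) with (2 * 2 ^ D).
      assert (P : 0 < 2 ^ D) by (apply pow_lt; lra).
      assert (E1 : L * (/ INR d * / (2 * 2 ^ D)) = L / (2 * (INR d * 2^D))) by (field; lra).
      rewrite E1. unfold beta.
      apply Rmult_le_reg_r with (2 * (INR d * 2 ^ D)). nra.
      replace (L / (2 * (INR d * 2 ^ D)) * (2 * (INR d * 2 ^ D))) with L by (field; nra).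
      assert (Hinv : / (2 * (s * (gamma / L))) = L / (2 * s * gamma)) by (field; lra).
      rewrite Hinv in HN.
      assert (INR d * 2 ^ D <= 2 * (L / (2 * s * gamma))) by lra.
      assert (5/4 * gamma * (2 * (INR d * 2 ^ D)) <= 5/4 * gamma * (2 * (2 * (L / (2 * s * gamma))))).
      { apply Rmult_le_compat_l. lra. lra. }
      assert (5/4 * gamma * (2 * (2 * (L / (2 * s * gamma)))) = 5/2 * L / s) by (field; lra).
      assert (5/2 * L / s <= L).
      { apply Rmult_le_reg_r with s. lra. replace (5/2 * L / s * s) with (5/2 * L) by (field; lra). nra. }
      lra. }
    exists (Fcls 0 L beta d). split; [|split].
    + intros f [c ->]. split.
      * intros x Hx. pose proof (fv_bounds 0 L beta d c x HL ltac:(unfold beta; lra) Hd Hx). unfold beta in *. lra.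
      * intros x y Hx Hy. apply fv_lip; auto. unfold beta; lra.
    + apply pdim_Fcls; auto. unfold beta; lra.
    + exists (d * D)%nat. intros T HT A HA.
      destruct (main_game A L gamma d D T HL ltac:(lra) Hd HD Hdel HT HA) as [xs [ys [Hxs Hgain]]].
      exists xs, ys. split; auto. fold beta in Hgain.
      set (n := (d * D)%nat) in *. set (m := (T / n)%nat) in *.
      assert (Hn : (1 <= n)%nat) by (unfold n; nia).
      assert (Hm : (1 <= m)%nat) by (apply Nat.div_str_pos; lia).
      assert (HTle : (T <= 2 * n * m)%nat).
      { pose proof (Nat.div_mod_eq T n). pose proof (Nat.mod_upper_bound T n ltac:(lia)). fold m in H. nia. }
      assert (Hln : ln (INR N / INR d) <= 2 * INR D).
      { apply lt_INR in HK2. rewrite !mult_INR, pow_INR, HN1 in HK2. simpl INR in HK2.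
        replace (1 + 1) with 2 in HK2 by ring.
        assert (HN2 : (2 <= N)%nat) by lia. apply le_INR in HN2. simpl INR in HN2.
        assert (INR N / INR d < 2 ^ S D).
        { apply Rmult_lt_reg_r with (INR d); auto. unfold Rdiv. rewrite Rmult_assoc, Rinv_l by lra. simpl pow in *. lra. }
        assert (0 < INR N / INR d) by (unfold Rdiv; apply Rmult_lt_0_compat; [lra|apply Rinv_0_lt_compat; lra]).
        pose proof (ln_increasing _ _ H0 H). rewrite ln_pow in H1 by lra. rewrite S_INR in H1.
        pose proof ln2_lt1. pose proof (ln_lt_2). assert (1 <= INR D) by (apply (le_INR 1); lia).
        assert ((INR D + 1) * ln 2 <= INR D + 1) by nra. lra. }
      set (sm := sqrt (INR m)).
      assert (Hmpos : 0 < INR m) by (apply lt_0_INR; lia).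
      assert (Hsm : 0 < sm) by (apply sqrt_lt_R0; auto).
      assert (Hsm2 : sm * sm = INR m) by (apply sqrt_sqrt; lra).
      assert (Hbound : INR T * INR d * ln (INR N / INR d) <= (2 * INR n * sm) * (2 * INR n * sm)).
      { apply le_INR in HTle. rewrite !mult_INR in HTle. simpl INR in HTle. replace (1+1) with 2 in HTle by ring.
        assert (0 <= INR T * INR d) by (apply Rmult_le_pos; apply pos_INR).
        assert (INR T * INR d * ln (INR N / INR d) <= INR T * INR d * (2 * INR D)) by (apply Rmult_le_compat_l; auto).
        assert (Hnd : INR n = INR d * INR D) by (unfold n; apply mult_INR).
        assert (0 <= INR n) by apply pos_INR.
        assert (INR T * INR d * (2 * INR D) = 2 * INR T * INR n) by (rewrite Hnd; ring).
        assert (2 * INR T * INR n <= 2 * (2 * INR n * INR m) * INR n) by nra.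
        assert (Hq : (2 * INR n * sm) * (2 * INR n * sm) = 4 * INR n * INR n * (sm * sm)) by ring.
        rewrite Hsm2 in Hq. nra. }
      apply sqrt_le_1_alt in Hbound. rewrite sqrt_square in Hbound.
      2:{ pose proof (pos_INR n). nra. }
      assert (0 <= INR n) by apply pos_INR.
      assert (1/10 * (2 * INR n * sm) <= 5/18 * INR n * sm) by nra.
      fold sm in Hgain. lra.
Qed.
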